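(* Let $M$ be a $3\times 3$ integer matrix, all of whose eigenvalues have modulus $>1$, let $m=|\det M|$, and let $T\subset\mathbb R^3$ be a self-affine lattice tile with respect to $M$ (and some standard digit set). If $T$ is conjugate to a self-similar tile, then at least one of the following holds: (i) $m$ is the cube of an integer; in particular $m\ge 8$; (ii) there is $s\in\{+1,-1\}$ such that $M$ is similar over $\mathbb R$ to the matrix $\begin{pmatrix}0&0&s\,m\\1&0&0\\0&1&0\end{pmatrix}$ (equivalently, the characteristic polynomial of $M$ is $\lambda^3-s\,m$).
   Context: A self-affine lattice tile with respect to an integer expanding matrix $M$ (all eigenvalues of modulus $>1$) is the unique nonempty compact set $T$ with $MT=\bigcup_{j=1}^m (T+k_j)$, where $m=|\det M|$ and $\{k_1,\dots,k_m\}\subset\mathbb Z^3$ is a complete set of residues of $\mathbb Z^3$ modulo $M\mathbb Z^3$ (a standard digit set). $T$ is conjugate to a self-similar tile if there is an invertible linear map $h$ of $\mathbb R^3$ such that $hMh^{-1}$ is a positive multiple of an orthogonal map; in that case all eigenvalues of $M$ have the same modulus. *)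

(* Defs.v *)
From Stdlib Require Import Reals.
From HB Require Import structures.
From mathcomp Require Import all_boot all_order all_algebra all_field.
Unset Printing Implicit Defensive.
Import Order.TTheory GRing.Theory Num.Theory.

Definition expanding (M : 'M[int]_3) : Prop :=
  forall z : algC, eigenvalue (map_mx (fun a : int => (a%:~R : algC)%R) M) z ->
    (1 < `|z|)%R.

Definition mdet (M : 'M[int]_3) : nat := absz (\det M)%R.

Definition standard_digits (M : 'M[int]_3) (k : 'I_(mdet M) -> 'cV[int]_3) : Prop :=
  forall v : 'cV[int]_3, exists! j : 'I_(mdet M), exists w : 'cV[int]_3,
    v = (k j + M *m w)%R.

Definition vecR := 'I_3 -> R.
Definition matR := 'I_3 -> 'I_3 -> R.

Definition i0 : 'I_3 := @Ordinal 3 0 isT.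
Definition i1 : 'I_3 := @Ordinal 3 1 isT.
Definition i2 : 'I_3 := @Ordinal 3 2 isT.

Definition sum3 (f : 'I_3 -> R) : R := Rplus (Rplus (f i0) (f i1)) (f i2).

Definition intR (z : int) : R :=
  match z with Posz n => INR n | Negz n => Ropp (INR n.+1) end.

Definition mxR (A : 'M[int]_3) : matR := fun i j => intR (A i j).
Definition cvR (v : 'cV[int]_3) : vecR := fun i => intR (v i ord0).

Definition matvec (A : matR) (x : vecR) : vecR :=
  fun i => sum3 (fun j => Rmult (A i j) (x j)).
Definition matmul (A B : matR) : matR :=
  fun i j => sum3 (fun l => Rmult (A i l) (B l j)).
Definition idR : matR := fun i j => if i == j then R1 else R0.
Definition trR (A : matR) : matR := fun i j => A j i.
Definition scaleR (c : R) (A : matR) : matR := fun i j => Rmult c (A i j).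
Definition vadd (x y : vecR) : vecR := fun i => Rplus (x i) (y i).

Definition inverse_pair (h g : matR) : Prop := matmul h g = idR /\ matmul g h = idR.

Definition orthogonal (Q : matR) : Prop := matmul (trR Q) Q = idR.

Definition dist3 (x y : vecR) : R :=
  sqrt (sum3 (fun i => Rsqr (Rminus (x i) (y i)))).

Definition bounded3 (T : vecR -> Prop) : Prop :=
  exists r : R, forall x, T x -> Rle (dist3 x (fun _ => R0)) r.
Definition closed3 (T : vecR -> Prop) : Prop :=
  forall x, (forall eps, Rlt 0 eps -> exists y, T y /\ Rlt (dist3 x y) eps) -> T x.
Definition compact3 (T : vecR -> Prop) : Prop := bounded3 T /\ closed3 T.

Definition self_affine_tile (M : 'M[int]_3) (k : 'I_(mdet M) -> 'cV[int]_3)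
    (T : vecR -> Prop) : Prop :=
  (exists x, T x) /\ compact3 T /\
  forall x : vecR,
    (exists y, T y /\ x = matvec (mxR M) y) <->
    (exists (j : 'I_(mdet M)) y, T y /\ x = vadd y (cvR (k j))).

Definition conj_self_similar (M : 'M[int]_3) : Prop :=
  exists (h g : matR) (c : R) (Q : matR),
    inverse_pair h g /\ Rlt 0 c /\ orthogonal Q /\
    matmul (matmul h (mxR M)) g = scaleR c Q.

Definition companion (s : int) (m : nat) : 'M[int]_3 :=
  \matrix_(i < 3, j < 3)
    (if (i == 0%N :> nat) && (j == 2%N :> nat) then (s * m%:Z)%R
     else if (i == j.+1 :> nat) then 1 else 0)%R.

Definition similar_over_R (A B : 'M[int]_3) : Prop :=
  exists P Pinv : matR, inverse_pair P Pinv /\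
    matmul (matmul P (mxR A)) Pinv = mxR B.

(* Main.v *)
Require Import Defs.
From Stdlib Require Import Reals Lra Psatz Classical FunctionalExtensionality.
From HB Require Import structures.
From mathcomp Require Import all_boot all_order all_algebra all_field.
Import Order.TTheory GRing.Theory Num.Theory.
Local Open Scope R_scope.

Lemma intR_oppP (n : nat) : intR (- (n%:Z))%R = - INR n.
Proof. case: n => [|n] /=; first by rewrite /=; lra. by []. Qed.

Lemma intR_sub_nat (a b : nat) : intR (a%:Z - b%:Z)%R = INR a - INR b.
Proof.
case: (leqP b a) => h.
  rewrite subzn //= minus_INR; [by [] | by apply/ssrnat.leP].
rewrite -opprB subzn ?(ltnW h) // intR_oppP minus_INR; first lra.
by apply/ssrnat.leP; apply: ltnW.
Qed.

Lemma int_rep (z : int) : exists a b : nat, z = (a%:Z - b%:Z)%R.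
Proof.
case: z => n; first by exists n, 0%N; rewrite GRing.subr0.
by exists 0%N, n.+1; rewrite GRing.sub0r NegzE.
Qed.

Lemma intR_add x y : intR (x + y)%R = intR x + intR y.
Proof.
have [a [b ->]] := int_rep x; have [c [d ->]] := int_rep y.
rewrite addrACA -opprD -!PoszD !intR_sub_nat !plus_INR; lra.
Qed.

Lemma intR_opp x : intR (- x)%R = - intR x.
Proof.
have [a [b ->]] := int_rep x. rewrite opprB !intR_sub_nat; lra.
Qed.

Lemma intR_nat (n : nat) : intR (n%:Z) = INR n.
Proof. by []. Qed.

Lemma intR_mul x y : intR (x * y)%R = intR x * intR y.
Proof.
have [a [b ->]] := int_rep x; have [c [d ->]] := int_rep y.
rewrite mulrBl !mulrBr !intR_add !intR_opp -!PoszM !intR_nat !intR_sub_nat !mult_INR.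
ring.
Qed.

Lemma intR_sub x y : intR (x - y)%R = intR x - intR y.
Proof. rewrite intR_add intR_opp; ring. Qed.

Lemma intR_inj x y : intR x = intR y -> x = y.
Proof.
have [a [b ->]] := int_rep x; have [c [d ->]] := int_rep y.
rewrite !intR_sub_nat => h.
have h2 : INR (a + d) = INR (c + b) by rewrite !plus_INR; lra.
have /eqP := INR_eq _ _ h2. rewrite -(eqn_add2r b) => /eqP _.
apply/eqP; rewrite subr_eq addrAC eq_sym subr_eq -!PoszD.
by rewrite (INR_eq _ _ h2).
Qed.

Lemma intR0 : intR 0%R = 0. Proof. by []. Qed.
Lemma intR1 : intR 1%R = 1. Proof. by []. Qed.
Lemma intR_N1 : intR (-1)%R = -1. Proof. by []. Qed.

Lemma intR_expr x n : intR (x ^+ n)%R = intR x ^ n.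
Proof. elim: n => [|n IH] //. by rewrite exprS intR_mul IH. Qed.

Lemma det3E (A : 'M[int]_3) :
  (\det A)%R = (A i0 i0 * (A i1 i1 * A i2 i2 - A i1 i2 * A i2 i1)
         - A i0 i1 * (A i1 i0 * A i2 i2 - A i1 i2 * A i2 i0)
         + A i0 i2 * (A i1 i0 * A i2 i1 - A i1 i1 * A i2 i0))%R.
Proof.
pose f := fun i j : nat => A (inord i) (inord j).
have HA : A = (\matrix_(i,j) f i j)%R by apply/matrixP=> i j; rewrite mxE /f !inord_val.
rewrite HA (expand_det_row _ ord0) !big_ord_recl big_ord0 /cofactor.
rewrite !(expand_det_row _ ord0) !big_ord_recl !big_ord0 /cofactor.
rewrite !det_mx11 !mxE /= /bump /=.
rewrite ?(addn0, add0n, addSn, addnS) ?expr0 ?expr1 ?sqrrN ?expr1n ?mulN1r ?mul1r ?addr0.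
apply: intR_inj. rewrite !(intR_add, intR_mul, intR_opp, intR_sub, intR_expr, intR0, intR_N1).
move: (intR (f 0%N 0%N)) (intR (f 0%N 1%N)) (intR (f 0%N 2%N)) (intR (f 1%N 0%N)) (intR (f 1%N 1%N)) (intR (f 1%N 2%N)) (intR (f 2%N 0%N)) (intR (f 2%N 1%N)) (intR (f 2%N 2%N)) => *.

ring.
Qed.

Definition tr3 (X : matR) := X i0 i0 + X i1 i1 + X i2 i2.
Definition det3 (X : matR) :=
  X i0 i0 * (X i1 i1 * X i2 i2 - X i1 i2 * X i2 i1)
  - X i0 i1 * (X i1 i0 * X i2 i2 - X i1 i2 * X i2 i0)
  + X i0 i2 * (X i1 i0 * X i2 i1 - X i1 i1 * X i2 i0).
Definition u3 (X : matR) :=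
  (X i1 i1 * X i2 i2 - X i1 i2 * X i2 i1) + (X i0 i0 * X i2 i2 - X i0 i2 * X i2 i0)
  + (X i0 i0 * X i1 i1 - X i0 i1 * X i1 i0).

Definition a00 (X : matR) := X i1 i1 * X i2 i2 - X i1 i2 * X i2 i1.
Definition a01 (X : matR) := - (X i0 i1 * X i2 i2 - X i0 i2 * X i2 i1).
Definition a02 (X : matR) := X i0 i1 * X i1 i2 - X i0 i2 * X i1 i1.
Definition a10 (X : matR) := - (X i1 i0 * X i2 i2 - X i1 i2 * X i2 i0).
Definition a11 (X : matR) := X i0 i0 * X i2 i2 - X i0 i2 * X i2 i0.
Definition a12 (X : matR) := - (X i0 i0 * X i1 i2 - X i0 i2 * X i1 i0).
Definition a20 (X : matR) := X i1 i0 * X i2 i1 - X i1 i1 * X i2 i0.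
Definition a21 (X : matR) := - (X i0 i0 * X i2 i1 - X i0 i1 * X i2 i0).
Definition a22 (X : matR) := X i0 i0 * X i1 i1 - X i0 i1 * X i1 i0.

Definition Uform (A E : matR) :=
  a00 A * a00 E + a01 A * a10 E + a02 A * a20 E +
  a10 A * a01 E + a11 A * a11 E + a12 A * a21 E +
  a20 A * a02 E + a21 A * a12 E + a22 A * a22 E.

Definition Tform (A E : matR) :=
  sum3 (fun i => sum3 (fun j => A i j * E j i)).

Ltac unf := unfold Uform, Tform, u3, det3, tr3, a00, a01, a02, a10, a11, a12, a20, a21, a22, matmul, sum3, scaleR, trR.

Lemma tr_sim h A g : tr3 (matmul (matmul h A) g) = Tform A (matmul g h).
Proof. unf; ring. Qed.

Lemma det_mul X Y : det3 (matmul X Y) = det3 X * det3 Y.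
Proof. unf; ring. Qed.

Lemma u_sim h A g : u3 (matmul (matmul h A) g) = Uform A (matmul g h).
Proof. unf; ring. Qed.

Lemma idR00 : idR i0 i0 = 1. Proof. reflexivity. Qed.
Lemma idR01 : idR i0 i1 = 0. Proof. reflexivity. Qed.
Lemma idR02 : idR i0 i2 = 0. Proof. reflexivity. Qed.
Lemma idR10 : idR i1 i0 = 0. Proof. reflexivity. Qed.
Lemma idR11 : idR i1 i1 = 1. Proof. reflexivity. Qed.
Lemma idR12 : idR i1 i2 = 0. Proof. reflexivity. Qed.
Lemma idR20 : idR i2 i0 = 0. Proof. reflexivity. Qed.
Lemma idR21 : idR i2 i1 = 0. Proof. reflexivity. Qed.
Lemma idR22 : idR i2 i2 = 1. Proof. reflexivity. Qed.
Ltac idRs := rewrite ?idR00 ?idR01 ?idR02 ?idR10 ?idR11 ?idR12 ?idR20 ?idR21 ?idR22.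

Lemma Tform_id A : Tform A idR = tr3 A.
Proof. unfold Tform, sum3, tr3; idRs; ring. Qed.
Lemma Uform_id A : Uform A idR = u3 A.
Proof. unf; idRs; ring. Qed.
Lemma det_id : det3 idR = 1.
Proof. unf; idRs; ring. Qed.

Lemma det_tr Q : det3 (trR Q) = det3 Q.
Proof. unf; ring. Qed.

Lemma u_orth_id Q : u3 Q - det3 Q * tr3 Q =
  (1 - matmul (trR Q) Q i0 i0) * a00 Q + (0 - matmul (trR Q) Q i0 i1) * a10 Q
  + (0 - matmul (trR Q) Q i0 i2) * a20 Q
  + (0 - matmul (trR Q) Q i1 i0) * a01 Q + (1 - matmul (trR Q) Q i1 i1) * a11 Q
  + (0 - matmul (trR Q) Q i1 i2) * a21 Q
  + (0 - matmul (trR Q) Q i2 i0) * a02 Q + (0 - matmul (trR Q) Q i2 i1) * a12 Q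
  + (1 - matmul (trR Q) Q i2 i2) * a22 Q.
Proof. unf; ring. Qed.

Lemma orth_facts Q : Defs.orthogonal Q -> det3 Q * det3 Q = 1 /\ u3 Q = det3 Q * tr3 Q.
Proof.
move=> HQ; split.
  by rewrite -{1}det_tr -det_mul HQ det_id.
have := u_orth_id Q; rewrite HQ; idRs => h; lra.
Qed.

Lemma scale_facts c Q : tr3 (scaleR c Q) = c * tr3 Q /\ u3 (scaleR c Q) = c^2 * u3 Q
  /\ det3 (scaleR c Q) = c^3 * det3 Q.
Proof. split; [|split]; unf; ring. Qed.

Lemma key_real (A : matR) (h g : matR) (c : R) (Q : matR) :
  inverse_pair h g -> 0 < c -> Defs.orthogonal Q -> matmul (matmul h A) g = scaleR c Q ->
  c^2 * u3 A = det3 A * tr3 A /\ det3 A * det3 A = c^6.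
Proof.
move=> [Hhg Hgh] c0 HQ HB.
have [dQ uQ] := orth_facts _ HQ.
have [st [su sd]] := scale_facts c Q.
have eT : tr3 A = c * tr3 Q by rewrite -Tform_id -Hgh -tr_sim HB st.
have eU : u3 A = c^2 * u3 Q by rewrite -Uform_id -Hgh -u_sim HB su.
have eD : det3 A = c^3 * det3 Q.
  have : det3 (matmul (matmul h A) g) = det3 A * det3 (matmul g h).
    rewrite !det_mul; ring.
  by rewrite Hgh det_id HB sd; lra.
rewrite eT eU eD uQ; split.
  ring.
have -> : c ^ 3 * det3 Q * (c ^ 3 * det3 Q) = c^6 * (det3 Q * det3 Q) by ring.
rewrite dQ; ring.
Qed.

Lemma expn_gt0_ (g : nat) : (0 < g)%N -> (0 < g ^ 3)%N.
Proof. by move=> h; rewrite expn_gt0 h. Qed.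

Lemma nat_cube (m a b : nat) : (0 < b)%N -> (m * b ^ 3 = a ^ 3)%N -> exists x, m = (x ^ 3)%N.
Proof.
move=> b0 h.
have g0 : (0 < gcdn a b)%N by rewrite gcdn_gt0 b0 orbT.
have ea : a = (a %/ gcdn a b * gcdn a b)%N by rewrite divnK // dvdn_gcdl.
have eb : b = (b %/ gcdn a b * gcdn a b)%N by rewrite divnK // dvdn_gcdr.
move: g0 ea eb; set g := gcdn a b; set a' := (a %/ g)%N; set b' := (b %/ g)%N.
move=> g0 ea eb.
have cop : coprime a' b'.
  rewrite /coprime; apply/eqP; apply/eqP; rewrite -(eqn_pmul2r g0) mul1n muln_gcdl -ea -eb.
  by [].
have h' : (m * b' ^ 3 = a' ^ 3)%N.
  apply/eqP; rewrite -(@eqn_pmul2r (g ^ 3)%N _ _ (expn_gt0_ _ g0)) -mulnA -!expnMn -ea -eb h.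
  by [].
have d : (b' ^ 3 %| a' ^ 3)%N by rewrite -h' dvdn_mull.
have c3 : coprime (b' ^ 3) (a' ^ 3) by rewrite coprimeXl // coprimeXr // coprime_sym.
have e1 : (b' ^ 3 = 1)%N by move: c3; rewrite /coprime; move/gcdn_idPl: d => ->; move/eqP.
exists a'; by rewrite -h' e1 muln1.
Qed.

Lemma intR_expr' x n : intR (x ^+ n)%R = intR x ^ n.
Proof. elim: n => [|n IH] //. by rewrite exprS intR_mul IH. Qed.

Lemma cube_rat (m : nat) (c : R) (p q : int) : 0 < c -> c^3 = INR m -> q <> 0%R ->
  c * intR q = intR p -> exists x, m = (x ^ 3)%N.
Proof.
move=> c0 Hm q0 Hq.
have E : intR (m%:Z * q ^+ 3)%R = intR (p ^+ 3)%R.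
  rewrite intR_mul !intR_expr' intR_nat -Hm -Hq; ring.
have /(congr1 absz) := intR_inj _ _ E.
rewrite abszM !abszX absz_nat => h.
apply: (nat_cube _ (absz p) (absz q)) => //.
by rewrite absz_gt0; apply/eqP.
Qed.

Definition tM (M : 'M[int]_3) : int := (M i0 i0 + M i1 i1 + M i2 i2)%R.
Definition uM (M : 'M[int]_3) : int :=
  ((M i1 i1 * M i2 i2 - M i1 i2 * M i2 i1) + (M i0 i0 * M i2 i2 - M i0 i2 * M i2 i0)
  + (M i0 i0 * M i1 i1 - M i0 i1 * M i1 i0))%R.

Lemma tr_link M : tr3 (mxR M) = intR (tM M).
Proof. rewrite /tM !intR_add /tr3 /mxR; ring. Qed.
Lemma u_link M : u3 (mxR M) = intR (uM M).
Proof. rewrite /uM !(intR_add, intR_sub, intR_mul, intR_opp) /u3 /mxR; ring. Qed.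
Lemma det_link M : det3 (mxR M) = intR (\det M)%R.
Proof. rewrite det3E !(intR_add, intR_sub, intR_mul, intR_opp) /det3 /mxR; ring. Qed.

Lemma INR_absz z : INR (absz z) = Rabs (intR z).
Proof.
case: z => n.
  change (INR n = Rabs (INR n)); rewrite Rabs_right //; apply: Rle_ge; apply: pos_INR.
change (INR n.+1 = Rabs (- INR n.+1)); rewrite Rabs_Ropp Rabs_right //; apply: Rle_ge; apply: pos_INR.
Qed.

Lemma detshift M : intR (\det (M - (\det M)%:M))%R =
  - intR (\det M)%R ^ 3 + intR (tM M) * intR (\det M)%R ^ 2 - intR (uM M) * intR (\det M)%R + intR (\det M)%R.
Proof.
rewrite -(det_link M) -(u_link M) -(tr_link M).
rewrite (det3E (M - _)%R) !mxE /= ?mulr1n ?mulr0n ?subr0.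
rewrite !(intR_add, intR_sub, intR_mul, intR_opp) -(det_link M).
rewrite /det3 /u3 /tr3 /mxR; ring.
Qed.

Lemma not_unit_eig M : expanding M -> (intR (\det M)%R = 1 \/ intR (\det M)%R = -1) ->
  intR (uM M) = intR (\det M)%R * intR (tM M) -> False.
Proof.
move=> Hexp dd Hu.
set D := (\det M)%R in dd Hu.
have hd : (\det (M - D%:M) = 0)%R.
  apply: intR_inj; rewrite detshift -/D Hu intR0.
  by case: dd => ->; ring.
set f := (fun a : int => (a%:~R : algC)%R).
set B := map_mx f M.
have eB : (map_mx f (M - D%:M) = B - (f D)%:M)%R.
  apply/matrixP => i j; rewrite !mxE /f intrB.
  by case: (i == j); rewrite ?mulr1n ?mulr0n ?mulr0z.
have hdB : (\det (B - (f D)%:M) == 0)%R.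
  by rewrite -eB det_map_mx hd.
have eig : eigenvalue B (f D).
  apply/eigenvalueP; move/det0P: hdB => [v v0 hv].
  exists v => //; apply/eqP; rewrite -subr_eq0 -mul_mx_scalar -mulmxBr; exact/eqP.
have := Hexp _ eig.
have : D = 1%R \/ D = (-1)%R.
  case: dd => h; [left | right]; apply: intR_inj; rewrite h //.
case => ->; rewrite /f ?intrN ?mulr1z ?normrN normr1 ltxx //.
Qed.

Lemma ord3 (i : 'I_3) : i = i0 \/ i = i1 \/ i = i2.
Proof.
case: i => [[|[|[|n]]] Hn]; [left|right;left|right;right|by []]; exact: val_inj.
Qed.

Lemma matR_ext (X Y : matR) : (forall i j, X i j = Y i j) -> X = Y.
Proof. move=> h; apply: functional_extensionality => i; apply: functional_extensionality => j; exact: h. Qed.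

Lemma all9 (P : 'I_3 -> 'I_3 -> Prop) :
  P i0 i0 -> P i0 i1 -> P i0 i2 -> P i1 i0 -> P i1 i1 -> P i1 i2 ->
  P i2 i0 -> P i2 i1 -> P i2 i2 -> forall i j, P i j.
Proof.
move=> ? ? ? ? ? ? ? ? ? i j.
by case: (ord3 i) => [->|[->|->]]; case: (ord3 j) => [->|[->|->]].
Qed.

Lemma matmul_assoc X Y Z : matmul (matmul X Y) Z = matmul X (matmul Y Z).
Proof. apply: matR_ext => i j; rewrite /matmul /sum3; ring. Qed.

Lemma matmul_idl X : matmul idR X = X.
Proof. apply: matR_ext; apply: all9; rewrite /matmul /sum3; idRs; ring. Qed.

Definition adjm (X : matR) : matR := fun i j =>
  match nat_of_ord i, nat_of_ord j with
  | 0, 0 => a00 X | 0, 1 => a01 X | 0, _ => a02 X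
  | 1, 0 => a10 X | 1, 1 => a11 X | 1, _ => a12 X
  | _, 0 => a20 X | _, 1 => a21 X | _, _ => a22 X end.

Definition invm (X : matR) : matR := fun i j => adjm X i j / det3 X.

Lemma invm_pair X : det3 X <> 0 -> inverse_pair (invm X) X.
Proof.
move=> h; split; apply: matR_ext; apply: all9; rewrite /matmul /sum3 /invm; idRs;
  rewrite /adjm /=; unf; field; exact h.
Qed.

Lemma CH (X : matR) : forall i j, matmul X (matmul X X) i j =
  tr3 X * matmul X X i j - u3 X * X i j + det3 X * idR i j.
Proof. apply: all9; idRs; unf; ring. Qed.

Definition CR (d : R) : matR := fun i j =>
  match nat_of_ord i, nat_of_ord j with 0, 2 => d | 1, 0 => 1 | 2, 1 => 1 | _, _ => 0 end.
Definition Xc (A : matR) : matR := fun i j =>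
  match nat_of_ord j with 0 => idR i i0 | 1 => A i i0 | _ => matmul A A i i0 end.

Lemma cube_inj x y : x ^ 3 = y ^ 3 -> x = y.
Proof.
move=> h.
have h2 : (x - y) * (x^2 + x*y + y^2) = 0 by nra.
case: (Rmult_integral _ _ h2) => h3; first lra.
have yy : y * y = 0 by have := pow2_ge_0 (2*x+y); have := pow2_ge_0 y; nra.
have y0 : y = 0 by case: (Rmult_integral _ _ yy).
rewrite y0 in h3 *; have xx : x * x = 0 by nra.
by case: (Rmult_integral _ _ xx).
Qed.

Lemma AXc (A : matR) : tr3 A = 0 -> u3 A = 0 ->
  matmul A (Xc A) = matmul (Xc A) (CR (det3 A)).
Proof.
move=> ht hu; apply: matR_ext; apply: all9;
rewrite /matmul /sum3 /Xc /CR /=; idRs; try ring; try (rewrite /matmul /sum3; ring).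
- transitivity (matmul A (matmul A A) i0 i0); first reflexivity.
  rewrite (CH A i0 i0) ht hu; idRs; ring.
- transitivity (matmul A (matmul A A) i1 i0); first reflexivity.
  rewrite (CH A i1 i0) ht hu; idRs; ring.
- transitivity (matmul A (matmul A A) i2 i0); first reflexivity.
  rewrite (CH A i2 i0) ht hu; idRs; ring.
Qed.

Lemma row_lin (x0 x1 x2 A00 A10 A20 b0 b1 b2 bk lam mu : R) :
  b0 - lam*A00 - mu = 0 -> b1 - lam*A10 = 0 -> b2 - lam*A20 = 0 ->
  x0*A00 + x1*A10 + x2*A20 - bk = 0 ->
  x0*b0 + x1*b1 + x2*b2 = lam*bk + mu*x0.
Proof.
move=> z0 z1 z2 zk.
have e : x0*b0 + x1*b1 + x2*b2 - (lam*bk + mu*x0) = x0*(b0 - lam*A00 - mu)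
  + x1*(b1 - lam*A10) + x2*(b2 - lam*A20) + lam*(x0*A00 + x1*A10 + x2*A20 - bk) by ring.
rewrite z0 z1 z2 zk !Rmult_0_r in e; lra.
Qed.

Lemma core (A00 A01 A02 A10 A11 A12 A20 A21 A22 b0 b1 b2 lam mu d : R) :
 A10 <> 0 \/ A20 <> 0 ->
 A00*A00 + A01*A10 + A02*A20 - b0 = 0 -> A10*A00 + A11*A10 + A12*A20 - b1 = 0 ->
 A20*A00 + A21*A10 + A22*A20 - b2 = 0 ->
 b0 - lam*A00 - mu = 0 -> b1 - lam*A10 = 0 -> b2 - lam*A20 = 0 ->
 A00*b0 + A01*b1 + A02*b2 = d -> A10*b0 + A11*b1 + A12*b2 = 0 ->
 A20*b0 + A21*b1 + A22*b2 = 0 ->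
 d = - lam^3.
Proof.
move=> nz h0 h1 h2 z0 z1 z2 c0 c1 c2.
have r0 := row_lin A00 A01 A02 A00 A10 A20 b0 b1 b2 b0 lam mu z0 z1 z2 h0.
have r1 := row_lin A10 A11 A12 A00 A10 A20 b0 b1 b2 b1 lam mu z0 z1 z2 h1.
have r2 := row_lin A20 A21 A22 A00 A10 A20 b0 b1 b2 b2 lam mu z0 z1 z2 h2.
have eb1 : b1 = lam * A10 by lra.
have eb2 : b2 = lam * A20 by lra.
have eb0 : b0 = lam * A00 + mu by lra.
rewrite c1 in r1; rewrite c2 in r2; rewrite eb1 in r1; rewrite eb2 in r2.
have m1 : (lam*lam + mu) * A10 = 0 by lra.
have m2 : (lam*lam + mu) * A20 = 0 by lra.
have emu : mu = - (lam*lam).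
  case: nz => nz.
  - case: (Rmult_integral _ _ m1) => // ?; lra.
  - case: (Rmult_integral _ _ m2) => // ?; lra.
rewrite c0 in r0; rewrite eb0 emu in r0; rewrite r0; ring.
Qed.

Lemma ratio_zero a1 a2 b1 b2 : a1 <> 0 -> a1*b2 - a2*b1 = 0 -> b2 - b1/a1*a2 = 0.
Proof. move=> h e. have -> : b2 - b1/a1*a2 = (a1*b2 - a2*b1)/a1 by field. rewrite e; field; exact h. Qed.

Lemma Xc0 A i : Xc A i i0 = idR i i0. Proof. by []. Qed.
Lemma Xc1 A i : Xc A i i1 = A i i0. Proof. by []. Qed.
Lemma Xc2 A i : Xc A i i2 = matmul A A i i0. Proof. by []. Qed.

Lemma detXc A : det3 (Xc A) = A i1 i0 * matmul A A i2 i0 - A i2 i0 * matmul A A i1 i0.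
Proof. rewrite /det3 !Xc0 !Xc1 !Xc2; idRs; ring. Qed.

Lemma detXc_cases (A : matR) th : tr3 A = 0 -> u3 A = 0 -> th^3 = det3 A -> th <> 0 ->
  det3 (Xc A) = 0 ->
  th = A i0 i0 \/ (A i1 i0 <> 0 /\ th * A i1 i0 = - matmul A A i1 i0)
  \/ (A i2 i0 <> 0 /\ th * A i2 i0 = - matmul A A i2 i0).
Proof.
move=> ht hu hth th0; rewrite detXc => hd.
have c0 : matmul A (matmul A A) i0 i0 = det3 A by rewrite CH ht hu; idRs; ring.
have c1 : matmul A (matmul A A) i1 i0 = 0 by rewrite CH ht hu; idRs; ring.
have c2 : matmul A (matmul A A) i2 i0 = 0 by rewrite CH ht hu; idRs; ring.
have e : forall k, matmul A (matmul A A) k i0 =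
  A k i0 * matmul A A i0 i0 + A k i1 * matmul A A i1 i0 + A k i2 * matmul A A i2 i0 by [].
have f : forall k, matmul A A k i0 = A k i0 * A i0 i0 + A k i1 * A i1 i0 + A k i2 * A i2 i0 by [].
rewrite e in c0; rewrite e in c1; rewrite e in c2.
move: c0 c1 c2 hd (f i0) (f i1) (f i2).
move: (matmul A A i0 i0) (matmul A A i1 i0) (matmul A A i2 i0) => b0 b1 b2.
move: (det3 A) hth => d hth.
move=> c0 c1 c2 hd f0 f1 f2.
case: (Req_dec (A i1 i0) 0) => a1; case: (Req_dec (A i2 i0) 0) => a2.
- left. rewrite a1 a2 in f0 f1 f2 c0. apply: cube_inj. rewrite hth -c0 f0 f1 f2. ring.
- right; right; split => //.
  set lam := b2 / A i2 i0.
  have hb1 : b1 = 0 by rewrite a1 in hd; nra.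
  have := core (A i0 i0) (A i0 i1) (A i0 i2) (A i1 i0) (A i1 i1) (A i1 i2) (A i2 i0) (A i2 i1) (A i2 i2)
    b0 b1 b2 lam (b0 - lam * A i0 i0) d (or_intror a2).
  move=> /(_ _ _ _ _ _ _ _ _ _) h. have {}h := h ltac:(lra) ltac:(lra) ltac:(lra) ltac:(lra)
    ltac:(rewrite hb1 a1; ring) ltac:(rewrite /lam; field; exact a2) ltac:(lra) ltac:(lra) ltac:(lra).
  have : th = - lam by apply: cube_inj; rewrite hth h; ring.
  move=> ->; rewrite /lam; field; exact a2.
- right; left; split => //.
  set lam := b1 / A i1 i0.
  have := core (A i0 i0) (A i0 i1) (A i0 i2) (A i1 i0) (A i1 i1) (A i1 i2) (A i2 i0) (A i2 i1) (A i2 i2)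
    b0 b1 b2 lam (b0 - lam * A i0 i0) d (or_introl a1).
  move=> /(_ _ _ _ _ _ _ _ _ _) h. have {}h := h ltac:(lra) ltac:(lra) ltac:(lra) ltac:(lra)
    ltac:(rewrite /lam; field; exact a1) ltac:(exact: ratio_zero a1 hd) ltac:(lra) ltac:(lra) ltac:(lra).
  have : th = - lam by apply: cube_inj; rewrite hth h; ring.
  move=> ->; rewrite /lam; field; exact a1.
- right; left; split => //.
  set lam := b1 / A i1 i0.
  have := core (A i0 i0) (A i0 i1) (A i0 i2) (A i1 i0) (A i1 i1) (A i1 i2) (A i2 i0) (A i2 i1) (A i2 i2)
    b0 b1 b2 lam (b0 - lam * A i0 i0) d (or_introl a1).
  move=> /(_ _ _ _ _ _ _ _ _ _) h. have {}h := h ltac:(lra) ltac:(lra) ltac:(lra) ltac:(lra)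
    ltac:(rewrite /lam; field; exact a1) ltac:(exact: ratio_zero a1 hd) ltac:(lra) ltac:(lra) ltac:(lra).
  have : th = - lam by apply: cube_inj; rewrite hth h; ring.
  move=> ->; rewrite /lam; field; exact a1.
Qed.

Lemma comp_CR (s : int) (m : nat) : mxR (companion s m) = CR (intR (s * m%:Z)%R).
Proof.
apply: matR_ext; apply: all9; rewrite /mxR /companion mxE /= /CR /=; try reflexivity.
Qed.

Lemma c3_eq (c d : R) (m : nat) : 0 < c -> d * d = c ^ 6 -> INR m = Rabs d -> c ^ 3 = INR m.
Proof.
move=> c0 h hm.
have rr : Rabs d * Rabs d = d * d by rewrite -Rabs_mult Rabs_right //; apply: Rle_ge; nra.
have pc : 0 < c ^ 3 by apply: pow_lt.
have ra := Rabs_pos d.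
have h' : Rabs d * Rabs d = c^3 * c^3 by rewrite rr h; ring.
have e : (Rabs d - c^3) * (Rabs d + c^3) = 0.
  have -> : (Rabs d - c^3) * (Rabs d + c^3) = Rabs d * Rabs d - c^3 * c^3 by ring.
  rewrite h'; ring.
case/Rmult_integral: e => h''; [rewrite hm; lra | lra].
Qed.

Theorem theorem2p3 (M : 'M[int]_3) (k : 'I_(mdet M) -> 'cV[int]_3)
    (T : vecR -> Prop) :
  expanding M -> standard_digits M k -> self_affine_tile M k T ->
  conj_self_similar M ->
  ((exists a : nat, mdet M = (a ^ 3)%N) /\ (8 <= mdet M)%N) \/
  (exists s : int, (s = 1%R \/ s = (-1)%R) /\
     similar_over_R M (companion s (mdet M))).
Proof.
move=> Hexp _ _ [h [g [c [Q [Hinv [c0 [HQ HB]]]]]]].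
have [k1 k2] := key_real (mxR M) h g c Q Hinv c0 HQ HB.
rewrite tr_link u_link det_link in k1 k2.
have hm : INR (mdet M) = Rabs (intR (\det M)%R) by rewrite /mdet INR_absz.
have hc3 := c3_eq c _ (mdet M) c0 k2 hm.
have pc : 0 < c ^ 3 by apply: pow_lt.
case: (classic (exists x, mdet M = (x ^ 3)%N)) => [[x hx]|ncube].
- left; split; first by exists x.
  rewrite hx; case: x hx => [|[|x]] hx.
  + exfalso; rewrite hx (_ : (0 ^ 3 = 0)%N) // in hc3; simpl in hc3; lra.
  + exfalso; rewrite hx (_ : (1 ^ 3 = 1)%N) // in hc3; simpl INR in hc3.
    have c1 : c = 1 by apply: cube_inj; rewrite hc3; ring.
    rewrite c1 in k1 hm; rewrite hx (_ : (1 ^ 3 = 1)%N) // in hm; simpl INR in hm.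
    apply: (not_unit_eig M Hexp).
    * move: hm; case: (Rcase_abs (intR (\det M)%R)) => hs.
      - rewrite Rabs_left // => ?; right; lra.
      - rewrite Rabs_right // => ?; left; lra.
    * lra.
  + by rewrite (leq_exp2r 2 x.+2 (ltn0Sn 2)).
- right.
  have irr : forall p q : int, q <> 0%R -> c * intR q <> intR p.
    move=> p q q0 hpq; apply: ncube; exact: cube_rat c0 hc3 q0 hpq.
  have dn0 : intR (\det M)%R <> 0.
    move=> d0; rewrite d0 Rabs_R0 in hm; lra.
  have t0 : tM M = 0%R.
    case: (eqVneq (tM M) 0%R) => // tn0; exfalso.
    apply: (irr ((mdet M)%:Z * uM M)%R ((\det M)%R * tM M)%R).
    + move=> /eqP; rewrite mulf_eq0 => /orP [] /eqP e.
      * by apply: dn0; rewrite e.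
      * by rewrite e eqxx in tn0.
    + rewrite !intR_mul intR_nat -hc3 -k1; ring.
  have u0 : uM M = 0%R.
    apply: intR_inj; rewrite t0 intR0 Rmult_0_r in k1.
    rewrite intR0; have c2 : c ^ 2 <> 0 by apply: pow_nonzero; lra.
    case: (Rmult_integral _ _ k1) => //.
  have [s [sm [ss sv]]] : exists s : int, (s * (mdet M)%:Z)%R = (\det M)%R /\
      intR s * intR s = 1 /\ (s = 1%R \/ s = (-1)%R).
    rewrite /mdet; case: (\det M)%R => n.
    - exists 1%R; split; first by rewrite mul1r.
      split; last by left. rewrite intR1; ring.
    - exists (-1)%R; split; first by rewrite NegzE mulN1r.
      split; last by right. rewrite intR_N1; ring.
  have [th eth] : exists th, th = intR s * c by eexists.
  have th3 : th ^ 3 = intR (\det M)%R.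
    rewrite eth -sm intR_mul intR_nat -hc3.
    have -> : (intR s * c) ^ 3 = (intR s * intR s) * intR s * c^3 by ring.
    by rewrite ss; ring.
  have th0 : th <> 0.
    move=> e; have : th ^ 3 = 0 by rewrite e; ring.
    by rewrite th3.
  have irr2 : forall p q : int, q <> 0%R -> th * intR q <> intR p.
    move=> p q q0 e; apply: (irr p (s * q)%R).
    + move=> /eqP; rewrite mulf_eq0 => /orP [/eqP es|/eqP eq]; last by apply: q0.
      by case: sv => e'; rewrite es in e'.
    + rewrite intR_mul -e eth.
      ring.
  set A := mxR M.
  have htr : tr3 A = 0 by rewrite tr_link t0.
  have hu : u3 A = 0 by rewrite u_link u0.
  have hd : th ^ 3 = det3 A by rewrite det_link.
  have dX : det3 (Xc A) <> 0.
    move=> dX0.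
    case: (detXc_cases A th htr hu hd th0 dX0) => [e|[[nz e]|[nz e]]].
    + apply: (irr2 (M i0 i0) 1%R) => //; rewrite intR1 e /A /mxR; ring.
    + apply: (irr2 (- (M i1 i0 * M i0 i0 + M i1 i1 * M i1 i0 + M i1 i2 * M i2 i0))%R (M i1 i0)).
      * by move=> e0; apply: nz; rewrite /A /mxR e0.
      * rewrite e !(intR_opp, intR_add, intR_mul) /A /matmul /sum3 /mxR; ring.
    + apply: (irr2 (- (M i2 i0 * M i0 i0 + M i2 i1 * M i1 i0 + M i2 i2 * M i2 i0))%R (M i2 i0)).
      * by move=> e0; apply: nz; rewrite /A /mxR e0.
      * rewrite e !(intR_opp, intR_add, intR_mul) /A /matmul /sum3 /mxR; ring.
  exists s; split.
    exact: sv.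
  exists (invm (Xc A)), (Xc A); split; first exact: invm_pair.
  rewrite matmul_assoc (AXc A htr hu) -matmul_assoc (proj1 (invm_pair _ dX)) matmul_idl.
  by rewrite comp_CR sm det_link.
Qed.
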